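(* Let $P\subseteq\mathbb{R}^2$ be a convex polygon such that $\tau P=P^{\circ}$ and $P$ has exactly $6$ vertices. Then the area of $P$ equals $3$.
   Context: $\tau:\mathbb{R}^2\to\mathbb{R}^2$ denotes the $90^\circ$ counterclockwise rotation. The polar of $P$ is $P^{\circ}=\{x\in\mathbb{R}^2: y^\top x\le 1\text{ for all }y\in P\}$. *)

(* Defs.v *)
From HB Require Import structures.
From mathcomp Require Import all_boot all_order all_algebra.
From mathcomp Require Import all_classical all_reals all_analysis.
Set Implicit Arguments. Unset Strict Implicit. Unset Printing Implicit Defensive.
Import Order.TTheory GRing.Theory Num.Theory.
Local Open Scope classical_set_scope.
Local Open Scope ring_scope.

Section Defs.
Context {R : realType}.

Definition dot2 (x y : R * R) : R := x.1 * y.1 + x.2 * y.2.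

Definition tau (x : R * R) : R * R := (- x.2, x.1).

Definition conv_hull (V : seq (R * R)) : set (R * R) :=
  [set x | exists w : 'I_(size V) -> R,
     (forall i, 0 <= w i) /\ \sum_(i < size V) w i = 1 /\
     x = (\sum_(i < size V) w i * (nth 0 V i).1,
          \sum_(i < size V) w i * (nth 0 V i).2)].

Definition convex_polygon (P : set (R * R)) : Prop :=
  exists V : seq (R * R), P = conv_hull V.

Definition polar (P : set (R * R)) : set (R * R) :=
  [set x | forall y, P y -> dot2 y x <= 1].

Definition is_vertex (P : set (R * R)) (x : R * R) : Prop :=
  P x /\ forall y z t, P y -> P z -> 0 < t < 1 ->
    x = (t * y.1 + (1 - t) * z.1, t * y.2 + (1 - t) * z.2) -> y = z.

Definition has_n_vertices (P : set (R * R)) (n : nat) : Prop :=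
  exists s : seq (R * R), uniq s /\ size s = n /\
    forall x, x \in s <-> is_vertex P x.

Definition area (P : set (R * R)) : \bar R :=
  ((@lebesgue_measure R) \x (@lebesgue_measure R))%E P.

End Defs.

(* Main.v *)
Require Import Defs.
From HB Require Import structures.
From mathcomp Require Import all_boot all_order all_algebra.
From mathcomp Require Import all_classical all_reals all_analysis.
From mathcomp Require Import ring lra measurable_realfun.
Import Order.TTheory GRing.Theory Num.Theory.
Import numFieldNormedType.Exports.
Local Open Scope classical_set_scope.
Local Open Scope ring_scope.
Set Implicit Arguments. Unset Strict Implicit.

Definition det2 {R : realType} (x y : R * R) : R := x.1 * y.2 - x.2 * y.1.
Definition neg2 {R : realType} (x : R * R) : R * R := (- x.1, - x.2).
Definition lin {R : realType} (a b : R) (y : R * R) : R := a * y.1 + b * y.2.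
Definition comb {R : realType} (t : R) (y z : R * R) : R * R :=
  (t * y.1 + (1 - t) * z.1, t * y.2 + (1 - t) * z.2).

Lemma F1 (R : realType) (P : set (R * R)) :
  tau @` P = polar P -> forall x, P x <-> (forall y, P y -> det2 x y <= 1).
Proof.
move=> ht x; split.
- move=> Px y Py.
  have : polar P (tau x) by rewrite -ht; exists x.
  move=> /(_ y Py); rewrite /dot2 /tau /det2 /=.
  by have -> : y.1 * - x.2 + y.2 * x.1 = x.1 * y.2 - x.2 * y.1 by ring.
- move=> H.
  have : polar P (tau x).
    move=> y Py; rewrite /dot2 /tau /=.
    have -> : y.1 * - x.2 + y.2 * x.1 = x.1 * y.2 - x.2 * y.1 by ring.
    exact: H.
  rewrite -ht => -[z Pz]; rewrite /tau => -[h1 h2].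
  move: Pz; case: z h1 h2 => z1 z2 /= h1 h2.
  suff -> : x = (z1, z2) by [].
  by move: h1 h2; case: (x) => x1 x2 /= h1 ->; congr pair; apply: oppr_inj.
Qed.

Lemma symP (R : realType) (P : set (R * R)) :
  (forall x, P x <-> (forall y, P y -> det2 x y <= 1)) ->
  forall x, P x -> P (neg2 x).
Proof.
move=> hF x Px; apply/hF => y Py.
have -> : det2 (neg2 x) y = det2 y x by rewrite /det2 /neg2 /=; ring.
by move/hF: Py; apply.
Qed.

Lemma avg_eq (R : realType) (a b m t : R) : 0 < t < 1 -> a <= m -> b <= m ->
  m = t * a + (1 - t) * b -> a = m /\ b = m.
Proof.
move=> /andP[t0 t1] am bm e.
have h1 : 0 <= t * (m - a) by apply: mulr_ge0; lra.
have h2 : 0 <= (1 - t) * (m - b) by apply: mulr_ge0; lra.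
have h3 : t * (m - a) + (1 - t) * (m - b) = 0.
  by rewrite e; ring.
have ha : t * (m - a) = 0 by lra.
have hb : (1 - t) * (m - b) = 0 by lra.
move/eqP: ha; rewrite mulf_eq0 => /orP[/eqP|/eqP]; first lra.
move/eqP: hb; rewrite mulf_eq0 => /orP[/eqP|/eqP]; first lra.
move=> h h'; split; lra.
Qed.

Lemma lexmax (R : realType) (f g : R * R -> R) (l : seq (R * R)) :
  l != [::] -> exists2 w, w \in l &
    forall v, v \in l -> f v <= f w /\ (f v = f w -> g v <= g w).
Proof.
elim: l => // a l IH _.
have [->|ln] := eqVneq l [::].
  exists a; first by rewrite inE eqxx.
  by move=> v; rewrite inE => /eqP ->; split.
have [w wl Hw] := IH ln.
have [fa|fa] := ltrP (f a) (f w).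
  exists w; first by rewrite inE wl orbT.
  move=> v; rewrite inE => /orP[/eqP ->|]; last exact: Hw.
  split; first exact: ltW.
  by move=> e; move: fa; rewrite e ltxx.
have [fe|fne] := eqVneq (f a) (f w).
  have [ga|ga] := leP (g w) (g a).
    exists a; first by rewrite inE eqxx.
    move=> v; rewrite inE => /orP[/eqP ->|vl]; first by split.
    have [h1 h2] := Hw v vl; rewrite fe; split => // e.
    exact: le_trans (h2 e) ga.
  exists w; first by rewrite inE wl orbT.
  move=> v; rewrite inE => /orP[/eqP ->|]; last exact: Hw.
  by rewrite fe; split => // _; exact: ltW.
have fa' : f w < f a by rewrite lt_neqAle eq_sym fne fa.
exists a; first by rewrite inE eqxx.
move=> v; rewrite inE => /orP[/eqP ->|vl]; first by split.
have [h1 h2] := Hw v vl; split; first exact: (le_trans h1 (ltW fa')).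
by move=> e; move: fa'; rewrite -e => /(le_lt_trans h1); rewrite ltxx.
Qed.

Lemma conv_lin (R : realType) (V : seq (R * R)) (w : 'I_(size V) -> R) (a b : R) :
  lin a b (\sum_(i < size V) w i * (nth 0 V i).1,
           \sum_(i < size V) w i * (nth 0 V i).2) =
  \sum_(i < size V) w i * lin a b (nth 0 V i).
Proof.
rewrite /lin /= !mulr_sumr -big_split /=; apply: eq_bigr => i _; ring.
Qed.

Lemma conv_lex (R : realType) (V : seq (R * R)) (a b c d : R) (w y : R * R) :
  (forall v, v \in V -> lin a b v <= lin a b w /\
     (lin a b v = lin a b w -> lin c d v <= lin c d w)) ->
  conv_hull V y ->
  lin a b y <= lin a b w /\ (lin a b y = lin a b w -> lin c d y <= lin c d w).
Proof.
move=> Hw [lam [l0 [l1 ->]]].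
have memV (i : 'I_(size V)) : nth 0 V i \in V by apply: mem_nth.
rewrite !conv_lin.
have sumc (k : R) : \sum_(i < size V) lam i * k = k.
  by rewrite -mulr_suml l1 mul1r.
split.
  rewrite -[X in _ <= X](sumc (lin a b w)); apply: ler_sum => i _.
  by apply: ler_wpM2l => //; have [] := Hw _ (memV i).
move=> e.
have e0 : \sum_(i < size V) lam i * (lin a b w - lin a b (nth 0 V i)) = 0.
  have -> : \sum_(i < size V) lam i * (lin a b w - lin a b (nth 0 V i)) =
     \sum_(i < size V) lam i * lin a b w - \sum_(i < size V) lam i * lin a b (nth 0 V i).
    by rewrite -sumrB; apply: eq_bigr => i _; ring.
  by rewrite sumc e subrr.
have ei : forall i : 'I_(size V), lam i * (lin a b w - lin a b (nth 0 V i)) = 0.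
  move=> i; apply: (psumr_eq0P _ e0) => // j _.
  by apply: mulr_ge0 => //; have [] := Hw _ (memV j); lra.
rewrite -[X in _ <= X](sumc (lin c d w)); apply: ler_sum => i _.
have := ei i.
have [h1 h2] := Hw _ (memV i).
move=> /eqP; rewrite mulf_eq0 => /orP[/eqP ->|/eqP h]; first by rewrite !mul0r.
by apply: ler_wpM2l => //; apply: h2; lra.
Qed.

Lemma mem_conv (R : realType) (V : seq (R * R)) (v : R * R) :
  v \in V -> conv_hull V v.
Proof.
move=> vV.
have jlt : (index v V < size V)%N by rewrite index_mem.
pose j : 'I_(size V) := Ordinal jlt.
exists (fun i => (i == j)%:R); split; first by move=> i; rewrite ler0n.
have key (F : 'I_(size V) -> R) : \sum_(i < size V) (i == j)%:R * F i = F j.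
  rewrite (bigD1 j) //= eqxx mul1r big1 ?addr0 // => i /negbTE ->.
  by rewrite mul0r.
split.
  have := key (fun _ => 1); rewrite /= => h.
  by rewrite -[RHS]h; apply: eq_bigr => i _; rewrite mulr1.
by rewrite !key /= nth_index //; case: (v).
Qed.

Lemma conv_nil (R : realType) (y : R * R) : ~ conv_hull [::] y.
Proof.
by move=> [lam [_ [l1 _]]]; move: l1; rewrite big_ord0 => /eqP; rewrite eq_sym oner_eq0.
Qed.

Lemma lin_inj (R : realType) (x y z : R * R) : (x.1 != 0) || (x.2 != 0) ->
  lin (- x.2) x.1 y = lin (- x.2) x.1 z -> lin x.1 x.2 y = lin x.1 x.2 z -> y = z.
Proof.
rewrite /lin => hx e1 e2.
have hn : 0 < x.1 ^+ 2 + x.2 ^+ 2.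
  case/orP: hx => h.
    by apply: ltr_pwDl; [rewrite exprn_gt0 // normr_gt0 | rewrite sqr_ge0] ||
       (rewrite ltr_wpDr ?sqr_ge0 // lt_def sqrf_eq0 h sqr_ge0).
  by rewrite ltr_wpDl ?sqr_ge0 // lt_def sqrf_eq0 h sqr_ge0.
have d1 : (x.1 ^+ 2 + x.2 ^+ 2) * (y.1 - z.1) = 0.
  have -> : (x.1 ^+ 2 + x.2 ^+ 2) * (y.1 - z.1) =
    x.1 * (x.1 * y.1 + x.2 * y.2 - (x.1 * z.1 + x.2 * z.2))
    - x.2 * (- x.2 * y.1 + x.1 * y.2 - (- x.2 * z.1 + x.1 * z.2)) by ring.
  by rewrite e1 e2 !subrr !mulr0 subrr.
have d2 : (x.1 ^+ 2 + x.2 ^+ 2) * (y.2 - z.2) = 0.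
  have -> : (x.1 ^+ 2 + x.2 ^+ 2) * (y.2 - z.2) =
    x.2 * (x.1 * y.1 + x.2 * y.2 - (x.1 * z.1 + x.2 * z.2))
    + x.1 * (- x.2 * y.1 + x.1 * y.2 - (- x.2 * z.1 + x.1 * z.2)) by ring.
  by rewrite e1 e2 !subrr !mulr0 addr0.
move/eqP: d1; rewrite mulf_eq0 (gt_eqF hn) /= subr_eq0 => /eqP h1.
move/eqP: d2; rewrite mulf_eq0 (gt_eqF hn) /= subr_eq0 => /eqP h2.
by move: h1 h2; case: (y); case: (z) => ? ? ? ? /= -> ->.
Qed.

Lemma KM (R : realType) (P : set (R * R)) (W s : seq (R * R)) :
  P = conv_hull W -> (forall x, x \in s <-> is_vertex P x) ->
  forall x, (forall v, v \in s -> det2 x v <= 1) ->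
  forall y, P y -> det2 x y <= 1.
Proof.
move=> PW hs x hx y Py.
have detE (z : R * R) : det2 x z = lin (- x.2) x.1 z by rewrite /det2 /lin; ring.
have [x0|xn0] := boolP ((x.1 == 0) && (x.2 == 0)).
  by case/andP: x0 => /eqP h1 /eqP h2; rewrite /det2 h1 h2 !mul0r subrr ler01.
have xn : (x.1 != 0) || (x.2 != 0) by rewrite -negb_and.
have Wn : W != [::].
  by apply/eqP => W0; move: Py; rewrite PW W0; apply: conv_nil.
have [w wW Hw] := @lexmax R (lin (- x.2) x.1) (lin x.1 x.2) W Wn.
have hlex z : P z -> lin (- x.2) x.1 z <= lin (- x.2) x.1 w /\
    (lin (- x.2) x.1 z = lin (- x.2) x.1 w -> lin x.1 x.2 z <= lin x.1 x.2 w).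
  by rewrite PW; apply: conv_lex.
have Pw : P w by rewrite PW; apply: mem_conv.
have vw : is_vertex P w.
  split => // y' z' t Py' Pz' ht hw.
  have [f1 g1] := hlex _ Py'; have [f2 g2] := hlex _ Pz'.
  have ef : lin (- x.2) x.1 w = t * lin (- x.2) x.1 y' + (1 - t) * lin (- x.2) x.1 z'.
    by rewrite hw /lin /=; ring.
  have eg : lin x.1 x.2 w = t * lin x.1 x.2 y' + (1 - t) * lin x.1 x.2 z'.
    by rewrite hw /lin /=; ring.
  have [a1 a2] := avg_eq ht f1 f2 ef.
  have [b1 b2] := avg_eq ht (g1 a1) (g2 a2) eg.
  by apply: (lin_inj xn); [rewrite a1 a2 | rewrite b1 b2].
have ws : w \in s by apply/hs.
rewrite detE; apply: le_trans (hlex _ Py).1 _.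
by rewrite -detE; apply: hx.
Qed.

Lemma neg2K (R : realType) (x : R * R) : neg2 (neg2 x) = x.
Proof. by rewrite /neg2 /= !opprK; case: x. Qed.

Lemma neg2_inj (R : realType) (x y : R * R) : neg2 x = neg2 y -> x = y.
Proof. by move=> h; rewrite -(neg2K x) h neg2K. Qed.

Lemma vneg (R : realType) (P : set (R * R)) :
  (forall x, P x <-> (forall y, P y -> det2 x y <= 1)) ->
  forall x, is_vertex P x -> is_vertex P (neg2 x).
Proof.
move=> hF x [Px Hx]; split; first exact: symP.
move=> y z t Py Pz ht e.
apply: neg2_inj; apply: (Hx (neg2 y) (neg2 z) t) => //; try exact: symP.
rewrite -(neg2K x) e /neg2 /=; congr pair; ring.
Qed.

Lemma pick_other (T : eqType) (s l : seq T) : uniq s -> (size l < size s)%N ->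
  exists2 v, v \in s & v \notin l.
Proof.
move=> us hl.
have [/hasP[v vs vl]|/hasPn H] := boolP (has (fun v => v \notin l) s).
  by exists v.
have : (size s <= size l)%N.
  by apply: uniq_leq_size => // v /H; rewrite negbK.
by rewrite leqNgt hl.
Qed.

Lemma nz_neq (R : realType) (x : R * R) : (x.1 != 0) || (x.2 != 0) -> x != neg2 x.
Proof.
move=> h; apply/eqP => e.
have e1 : x.1 = - x.1 by rewrite {1}e.
have e2 : x.2 = - x.2 by rewrite {1}e.
have z1 : x.1 = 0 by lra.
have z2 : x.2 = 0 by lra.
by move: h; rewrite z1 z2 eqxx.
Qed.

Lemma vnz (R : realType) (P : set (R * R)) (s : seq (R * R)) :
  (forall x, P x <-> (forall y, P y -> det2 x y <= 1)) ->
  (forall x, x \in s <-> is_vertex P x) -> uniq s -> (1 < size s)%N ->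
  forall x, x \in s -> (x.1 != 0) || (x.2 != 0).
Proof.
move=> hF hs us s2 x xs.
have [u us' ux] := pick_other (l := [:: x]) us s2.
rewrite -negb_and; apply/negP => /andP[/eqP x1 /eqP x2].
have [Pu _] := (hs u).1 us'.
have [_ Hx] := (hs x).1 xs.
have Pnu := symP hF Pu.
have := Hx u (neg2 u) (1/2) Pu Pnu.
have h12 : 0 < (1/2 : R) < 1 by rewrite divr_gt0 ?ltr01 ?ltr0n //= ltr_pdivrMr ?ltr0n // mul1r ltr1n.
move=> /(_ h12).
have e : x = (1 / 2 * u.1 + (1 - 1 / 2) * (neg2 u).1, 1 / 2 * u.2 + (1 - 1 / 2) * (neg2 u).2).
  rewrite /neg2 /=; move: x1 x2; case: (x) => ? ? /= -> ->; congr pair; lra.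
move=> /(_ e) eu.
have u0 : u.1 = 0 /\ u.2 = 0.
  have e1 : u.1 = - u.1 by rewrite {1}eu.
  have e2 : u.2 = - u.2 by rewrite {1}eu.
  split; lra.
move: ux; rewrite inE; apply/negP; rewrite negbK; apply/eqP.
by move: x1 x2 u0; case: (x); case: (u) => ? ? ? ? /= -> -> [-> ->].
Qed.

Lemma N1 (R : realType) (a b : R * R) : (neg2 a == neg2 b) = (a == b).
Proof. by apply/eqP/eqP => [/neg2_inj|->]. Qed.

Lemma N2 (R : realType) (a b : R * R) : (neg2 a == b) = (a == neg2 b).
Proof. by apply/eqP/eqP => [<-|->]; rewrite neg2K. Qed.

Lemma N3 (R : realType) (a b : R * R) : (a == neg2 b) = (b == neg2 a).
Proof. by rewrite -N2 eq_sym. Qed.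

Lemma select3 (R : realType) (s : seq (R * R)) : uniq s -> size s = 6%N ->
  (forall x, x \in s -> neg2 x \in s) ->
  (forall x, x \in s -> x != neg2 x) ->
  exists p q r, [/\ p \in s, q \in s, r \in s &
    forall v, v \in s -> v \in [:: p; neg2 p; q; neg2 q; r; neg2 r]].
Proof.
move=> us s6 sneg snz.
have [p ps _] := pick_other (l := [::]) us ltac:(by rewrite s6).
have [q qs qn] := pick_other (l := [:: p; neg2 p]) us ltac:(by rewrite s6).
have [r rs rn] := pick_other (l := [:: p; neg2 p; q; neg2 q]) us ltac:(by rewrite s6).
exists p, q, r; split => // v vs.
have [//|vn] := boolP (v \in [:: p; neg2 p; q; neg2 q; r; neg2 r]).
have hp := snz _ ps; have hq := snz _ qs; have hr := snz _ rs.
have : (size [:: v; p; neg2 p; q; neg2 q; r; neg2 r] <= size s)%N.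
  apply: uniq_leq_size.
    move: qn rn vn; rewrite /= !inE !negb_or !N1 !N2.
    move=> /andP[q1 q2] /and4P[r1 r2 r3 r4] /and3P[v1 v2 /and4P[v3 v4 v5 v6]].
    rewrite N3 in q2; rewrite N3 in r2; rewrite N3 in r4.
    rewrite eq_sym in q1; rewrite eq_sym in r1; rewrite eq_sym in r3.
    by rewrite hp hq hr q1 q2 r1 r2 r3 r4 v1 v2 v3 v4 v5 v6.
  move=> x; rewrite !inE => /orP[/eqP->//|/orP[/eqP->//|/orP[/eqP->|/orP[/eqP->//|/orP[/eqP->|/orP[/eqP->//|/eqP->]]]]]];
  exact: sneg.
by rewrite s6.
Qed.

Definition Q3 {R : realType} (p q r x : R * R) :=
  `|det2 x p| <= 1 /\ `|det2 x q| <= 1 /\ `|det2 x r| <= 1.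

Lemma det_neg (R : realType) (x v : R * R) : det2 x (neg2 v) = - det2 x v.
Proof. by rewrite /det2 /neg2 /=; ring. Qed.

Lemma abs_le1 (R : realType) (d : R) : d <= 1 -> - d <= 1 -> `|d| <= 1.
Proof. by move=> h1 h2; rewrite ler_norml h1 andbT lerNl. Qed.

Lemma abs_le1E (R : realType) (d : R) : `|d| <= 1 -> d <= 1 /\ - d <= 1.
Proof. by rewrite ler_norml => /andP[h1 h2]; split => //; rewrite lerNl. Qed.

Lemma PQ (R : realType) (P : set (R * R)) (W s : seq (R * R)) (p q r : R * R) :
  P = conv_hull W -> (forall x, x \in s <-> is_vertex P x) ->
  (forall x, P x <-> (forall y, P y -> det2 x y <= 1)) ->
  (forall v, v \in s -> v \in [:: p; neg2 p; q; neg2 q; r; neg2 r]) ->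
  P p -> P q -> P r -> forall x, P x <-> Q3 p q r x.
Proof.
move=> PW hs hF hsub Pp Pq Pr x.
have bnd v : P v -> P x -> `|det2 x v| <= 1.
  move=> Pv Px; have hx := proj1 (hF x) Px.
  apply: abs_le1; first exact: hx.
  by rewrite -det_neg; apply: hx; apply: symP.
split.
  by move=> Px; split; [|split]; apply: bnd.
move=> [h1 [h2 h3]]; apply/hF; apply: (KM PW hs) => v /hsub.
have [a1 a2] := abs_le1E h1; have [b1 b2] := abs_le1E h2; have [c1 c2] := abs_le1E h3.
by rewrite !inE => /orP[/eqP->|/orP[/eqP->|/orP[/eqP->|/orP[/eqP->|/orP[/eqP->|/eqP->]]]]];
  rewrite ?det_neg.
Qed.

Lemma absMle (R : realType) (k d e : R) : `|k| <= e -> `|d| <= 1 -> `|k * d| <= e.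
Proof.
move=> hk hd; rewrite normrM.
apply: le_trans (ler_wpM2l (normr_ge0 k) hd) _; by rewrite mulr1.
Qed.

Lemma AC (R : realType) (P : set (R * R)) (u v w : R * R) :
  (forall x, P x <-> Q3 u v w x) -> is_vertex P u -> P w ->
  (w.1 != 0) || (w.2 != 0) -> `|det2 u v| = 1.
Proof.
move=> hQ [Pu Hu] Pw wn.
have [qu1 [qu2 qu3]] := (hQ u).1 Pu.
have [qw1 [qw2 qw3]] := (hQ w).1 Pw.
apply/eqP; apply/negPn/negP => hne.
have lt1 : `|det2 u v| < 1 by rewrite lt_neqAle hne qu2.
set e := (1 - `|det2 u v|) / 2.
have e0 : 0 < e by rewrite /e divr_gt0 // ?ltr0n // subr_gt0.
have nuv := normr_ge0 (det2 u v).
have e1 : e <= 1 by rewrite /e; lra.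
have ee : `|det2 u v| + e < 1 by rewrite /e; lra.
have Qy (k : R) : `|k| <= e -> P (u.1 + k * w.1, u.2 + k * w.2).
  move=> hk; apply/hQ; split; [|split].
  - have -> : det2 (u.1 + k * w.1, u.2 + k * w.2) u = k * det2 w u by rewrite /det2 /=; ring.
    exact: le_trans (absMle hk qw1) e1.
  - have -> : det2 (u.1 + k * w.1, u.2 + k * w.2) v = det2 u v + k * det2 w v by rewrite /det2 /=; ring.
    apply: le_trans (ler_normD _ _) _.
    have := absMle hk qw2; lra.
  - by have -> : det2 (u.1 + k * w.1, u.2 + k * w.2) w = det2 u w by rewrite /det2 /=; ring.
have h12 : 0 < (1/2 : R) < 1 by rewrite divr_gt0 ?ltr01 ?ltr0n //= ltr_pdivrMr ?ltr0n // mul1r ltr1n.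
have ke : `|e| <= e by rewrite gtr0_norm.
have ke' : `|- e| <= e by rewrite normrN gtr0_norm.
have := Hu _ _ (1/2) (Qy e ke) (Qy (- e) ke') h12.
have eu : u = (1 / 2 * (u.1 + e * w.1, u.2 + e * w.2).1 + (1 - 1 / 2) * (u.1 + - e * w.1, u.2 + - e * w.2).1,
  1 / 2 * (u.1 + e * w.1, u.2 + e * w.2).2 + (1 - 1 / 2) * (u.1 + - e * w.1, u.2 + - e * w.2).2).
  by rewrite /=; case: (u) => a b /=; congr pair; lra.
move=> /(_ eu) [] h1 h2.
have : e * w.1 = 0 by lra.
have : e * w.2 = 0 by lra.
move=> /eqP; rewrite mulf_eq0 (gt_eqF e0) /= => /eqP z2.
move=> /eqP; rewrite mulf_eq0 (gt_eqF e0) /= => /eqP z1.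
by move: wn; rewrite z1 z2 eqxx.
Qed.

Lemma abs1 (R : realType) (x : R) : `|x| = 1 -> x * x = 1.
Proof.
by move/eqP; rewrite eqr_norml => /andP[/orP[/eqP->|/eqP->] _]; rewrite ?mulrNN mulr1.
Qed.

Definition Hex {R : realType} (a b : R * R) : set (R * R) :=
  [set x | Q3 a b (b.1 - a.1, b.2 - a.2) x].

Lemma normdet_scale (R : realType) (x q : R * R) (c : R) : `|c| = 1 ->
  `|det2 x (c * q.1, c * q.2)| = `|det2 x q|.
Proof.
move=> hc.
have -> : det2 x (c * q.1, c * q.2) = c * det2 x q by rewrite /det2 /=; ring.
by rewrite normrM hc mul1r.
Qed.

Lemma G1 (R : realType) (P : set (R * R)) :
  convex_polygon P -> tau @` P = polar P -> has_n_vertices P 6 ->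
  exists a b : R * R, det2 a b = 1 /\ P = Hex a b.
Proof.
move=> [W PW] ht [s [us [s6 hs]]].
have hF := F1 ht.
have sneg x : x \in s -> neg2 x \in s by move=> /hs /(vneg hF) /hs.
have s2 : (1 < size s)%N by rewrite s6.
have hnz := vnz hF hs us s2.
have snz x : x \in s -> x != neg2 x by move=> /hnz; apply: nz_neq.
have [p [q [r [ps qs rs hsub]]]] := select3 us s6 sneg snz.
have vp : is_vertex P p by apply/hs.
have vq : is_vertex P q by apply/hs.
have vr : is_vertex P r by apply/hs.
have hQ := PQ PW hs hF hsub vp.1 vq.1 vr.1.
have hQ2 x : P x <-> Q3 p r q x.
  by rewrite hQ /Q3; split => -[h1 [h2 h3]].
have hQ3 x : P x <-> Q3 q r p x.
  by rewrite hQ /Q3; split => -[h1 [h2 h3]].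
have dpq := AC hQ vp vr.1 (hnz _ rs).
have dpr := AC hQ2 vp vq.1 (hnz _ qs).
have dqr := AC hQ3 vq vp.1 (hnz _ ps).
have [sg esg] : exists sg : R, det2 p q = sg by eexists.
have [rh erh] : exists rh : R, det2 p r = rh by eexists.
rewrite esg in dpq; rewrite erh in dpr.
pose q' := (sg * q.1, sg * q.2).
pose r' := (rh * r.1, rh * r.2).
have hq' : det2 p q' = 1.
  rewrite -(abs1 dpq) -{2}esg.
  by rewrite /det2 /q' -esg /=; ring.
have hr' : det2 p r' = 1.
  rewrite -(abs1 dpr) -{2}erh.
  by rewrite /det2 /r' -erh /=; ring.
set k := det2 r' q'.
have hk : `|k| = 1.
  have -> : k = - (rh * sg) * det2 q r by rewrite /k /det2 /r' /q' /=; ring.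
  by rewrite normrM normrN normrM dpq dpr dqr !mulr1.
have idt1 : r'.1 = k * p.1 + q'.1.
  have : r'.1 * det2 p q' = det2 r' q' * p.1 + det2 p r' * q'.1 by rewrite /det2; ring.
  by rewrite hq' hr' !mulr1 mul1r.
have idt2 : r'.2 = k * p.2 + q'.2.
  have : r'.2 * det2 p q' = det2 r' q' * p.2 + det2 p r' * q'.2 by rewrite /det2; ring.
  by rewrite hq' hr' !mulr1 mul1r.
have nq x : `|det2 x q'| = `|det2 x q| by apply: normdet_scale.
have nr x : `|det2 x r'| = `|det2 x r| by apply: normdet_scale.
move/eqP: (hk); rewrite eqr_norml => /andP[/orP[/eqP k1|/eqP k1] _].
- exists p, r'; split => //.
  apply/seteqP; split => x /=; rewrite /Hex /Q3 /=.
    move/hQ => [h1 [h2 h3]]; split => //; split; first by rewrite nr.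
    have -> : (r'.1 - p.1, r'.2 - p.2) = q' by rewrite idt1 idt2 k1 !mul1r; case: (q') => ? ? /=; congr pair; ring.
    by rewrite nq.
  move=> [h1 [h2 h3]]; apply/hQ; split => //; split; first by rewrite -nq;
    have <- : (r'.1 - p.1, r'.2 - p.2) = q' by rewrite idt1 idt2 k1 !mul1r; case: (q') => ? ? /=; congr pair; ring.
  by rewrite -nr.
- exists p, q'; split => //.
  have e : (q'.1 - p.1, q'.2 - p.2) = r' by
    rewrite -[r']/(r'.1, r'.2) idt1 idt2 k1; case: (q') => ? ? /=; congr pair; ring.
  apply/seteqP; split => x /=; rewrite /Hex /Q3 /= e.
    by move/hQ => [h1 [h2 h3]]; rewrite nq nr.
  by rewrite nq nr => h; apply/hQ.
Qed.

Lemma leb_shift (R : realType) (c : R) (A : set R) : measurable A ->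
  lebesgue_measure [set y | A (y + c)] = lebesgue_measure A.
Proof.
move=> mA.
have mf : measurable_fun setT ((fun y => y + c) : R -> measurableTypeR R).
  by apply: measurable_funD => //; exact: measurable_cst.
have -> : [set y | A (y + c)] = ((fun y => y + c) : R -> measurableTypeR R) @^-1` A by [].
rewrite -[LHS]/(pushforward lebesgue_measure ((fun y => y + c) : R -> measurableTypeR R) A).
apply/esym/lebesgue_measure_unique => //.
move=> _ [[a b]] _ <-.
change (lebesgue_measure `]a, b]%classic = lebesgue_measure ((fun y => y + c) @^-1` `]a, b]%classic)).
rewrite (_ : _ @^-1` _ = `](a - c), (b - c)]%classic); last first.
  apply/seteqP; split => x /=; rewrite !in_itv /=.
    by move=> /andP[h1 h2]; apply/andP; split; lra.
  by move=> /andP[h1 h2]; apply/andP; split; lra.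
rewrite /= !lebesgue_measure_itv /= !lte_fin.
have -> : (a - c < b - c) = (a < b) by rewrite ltrBlDr subrK.
by case: ifP => // _; rewrite -!EFinD; congr (_%:E); ring.
Qed.

Lemma area_xshear (R : realType) (A B : set (R * R)) (c : R) :
  measurable (A : set (measurableTypeR R * measurableTypeR R)) ->
  (forall x y, B (x, y) <-> A (x, y + c * x)) -> area B = area A.
Proof.
move=> mA hAB; rewrite /area /product_measure1 /=.
apply: eq_integral => x _ /=.
have -> : xsection B x = [set y | xsection A x (y + c * x)].
  rewrite !xsectionE; apply/seteqP; split => y /=; by rewrite hAB.
by apply: leb_shift; apply: measurable_xsection.
Qed.

Lemma area_swap (R : realType) (A : set (R * R)) :
  measurable (A : set (measurableTypeR R * measurableTypeR R)) ->
  area A = ((@lebesgue_measure R) \x^ (@lebesgue_measure R))%E A.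
Proof.
move=> mA; rewrite /area.
apply: product_measure_unique => // X Y mX mY.
exact: product_measure2E.
Qed.

Lemma area_yshear (R : realType) (A B : set (R * R)) (c : R) :
  measurable (A : set (measurableTypeR R * measurableTypeR R)) ->
  measurable (B : set (measurableTypeR R * measurableTypeR R)) ->
  (forall x y, B (x, y) <-> A (x + c * y, y)) -> area B = area A.
Proof.
move=> mA mB hAB; rewrite !area_swap // /product_measure2 /=.
apply: eq_integral => y _ /=.
have -> : ysection B y = [set x | ysection A y (x + c * y)].
  rewrite !ysectionE; apply/seteqP; split => x /=; by rewrite hAB.
by apply: leb_shift; apply: measurable_ysection.
Qed.

Lemma meas_abs_lin (R : realType) (al be : R) :
  measurable ([set x | `|x.1 * al + x.2 * be| <= 1] : set (measurableTypeR R * measurableTypeR R)).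
Proof.
have mf : measurable_fun setT (fun x : (measurableTypeR R * measurableTypeR R) => x.1 * al + x.2 * be).
  apply: measurable_funD; apply: measurable_funM => //;
    (exact: measurable_fst || exact: measurable_snd || exact: measurable_cst).
have := mf measurableT `[-1, 1]%classic (measurable_itv _).
rewrite setTI; congr measurable; apply/seteqP; split => x /=; rewrite in_itv /= ler_norml //.
Qed.

Lemma meas_det (R : realType) (v : R * R) :
  measurable ([set x | `|det2 x v| <= 1] : set (measurableTypeR R * measurableTypeR R)).
Proof.
have := meas_abs_lin v.2 (- v.1); congr measurable; apply/seteqP; split => x /=;
  by rewrite /det2 mulrN (mulrC x.2).
Qed.

Lemma meas_Hex (R : realType) (a b : R * R) :
  measurable (Hex a b : set (measurableTypeR R * measurableTypeR R)).
Proof.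
have -> : Hex a b = [set x | `|det2 x a| <= 1] `&` ([set x | `|det2 x b| <= 1] `&`
   [set x | `|det2 x (b.1 - a.1, b.2 - a.2)| <= 1]) by [].
by apply: measurableI; [|apply: measurableI]; apply: meas_det.
Qed.

Definition Ush {R : realType} (c : R) (v : R * R) : R * R := (v.1, v.2 + c * v.1).
Definition Lsh {R : realType} (c : R) (v : R * R) : R * R := (v.1 + c * v.2, v.2).

Lemma detU (R : realType) (c x y : R) (v : R * R) :
  det2 (x, y) (Ush c v) = det2 (x, y + (- c) * x) v.
Proof. by rewrite /det2 /Ush /=; ring. Qed.

Lemma detL (R : realType) (c x y : R) (v : R * R) :
  det2 (x, y) (Lsh c v) = det2 (x + (- c) * y, y) v.
Proof. by rewrite /det2 /Lsh /=; ring. Qed.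

Lemma det2U (R : realType) (c : R) (a b : R * R) : det2 (Ush c a) (Ush c b) = det2 a b.
Proof. by rewrite /det2 /Ush /=; ring. Qed.

Lemma det2L (R : realType) (c : R) (a b : R * R) : det2 (Lsh c a) (Lsh c b) = det2 a b.
Proof. by rewrite /det2 /Lsh /=; ring. Qed.

Lemma Hex_U (R : realType) (c : R) (a b : R * R) :
  area (Hex (Ush c a) (Ush c b)) = area (Hex a b).
Proof.
apply: (area_xshear (c := - c)); first exact: meas_Hex.
move=> x y; rewrite /Hex /Q3 /=.
have -> : ((Ush c b).1 - (Ush c a).1, (Ush c b).2 - (Ush c a).2) =
   Ush c (b.1 - a.1, b.2 - a.2) by rewrite /Ush /=; congr pair; ring.
by rewrite !detU.
Qed.

Lemma Hex_L (R : realType) (c : R) (a b : R * R) :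
  area (Hex (Lsh c a) (Lsh c b)) = area (Hex a b).
Proof.
apply: (area_yshear (c := - c)); try exact: meas_Hex.
move=> x y; rewrite /Hex /Q3 /=.
have -> : ((Lsh c b).1 - (Lsh c a).1, (Lsh c b).2 - (Lsh c a).2) =
   Lsh c (b.1 - a.1, b.2 - a.2) by rewrite /Lsh /=; congr pair; ring.
by rewrite !detL.
Qed.

Definition ex1 {R : realType} : R * R := (1, 0).
Definition ex2 {R : realType} : R * R := (0, 1).



Lemma chainD (R : realType) (b : R * R) : det2 ex1 b = 1 ->
  area (Hex ex1 b) = area (Hex (@ex1 R) ex2).
Proof.
move=> hb.
have b2 : b.2 = 1 by move: hb; rewrite /det2 /ex1 /=; lra.
have E1 : Lsh (- b.1) ex1 = ex1 by rewrite /Lsh /ex1 /=; congr pair; ring.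
have E2 : Lsh (- b.1) b = ex2 by rewrite /Lsh /ex2 /= b2; congr pair; ring.
transitivity (area (Hex (Lsh (- b.1) ex1) (Lsh (- b.1) b))); first by rewrite Hex_L.
by rewrite E1 E2.
Qed.

Lemma chainC (R : realType) (a b : R * R) : a.2 = 0 -> a.1 != 0 -> det2 a b = 1 ->
  area (Hex a b) = area (Hex (@ex1 R) ex2).
Proof.
move=> a2 a1 hab.
pose k := (1 - a.1) / a.1.
transitivity (area (Hex (Ush (- a.1) (Lsh k (Ush 1 a))) (Ush (- a.1) (Lsh k (Ush 1 b))))).
  by rewrite Hex_U Hex_L Hex_U.
have EA : Ush (- a.1) (Lsh k (Ush 1 a)) = ex1.
  rewrite /Ush /Lsh /ex1 /k /= a2; congr pair; field; exact: a1.
rewrite EA; apply: chainD.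
by rewrite -EA det2U det2L det2U.
Qed.

Lemma chainB (R : realType) (a b : R * R) : a.1 != 0 -> det2 a b = 1 ->
  area (Hex a b) = area (Hex (@ex1 R) ex2).
Proof.
move=> a1 hab.
transitivity (area (Hex (Ush (- (a.2 / a.1)) a) (Ush (- (a.2 / a.1)) b))).
  by rewrite Hex_U.
apply: chainC; rewrite ?det2U //= /Ush /=.
by field.
Qed.

Lemma chainA (R : realType) (a b : R * R) : det2 a b = 1 ->
  area (Hex a b) = area (Hex (@ex1 R) ex2).
Proof.
move=> hab.
have [a1|a1] := eqVneq a.1 0; last exact: chainB.
have a2 : a.2 != 0.
  apply/eqP => a2; move: hab; rewrite /det2 a1 a2 !mul0r subrr => /eqP.
  by rewrite eq_sym oner_eq0.
transitivity (area (Hex (Lsh (1 / a.2) a) (Lsh (1 / a.2) b))).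
  by rewrite Hex_L.
apply: chainB; rewrite ?det2L //= /Lsh /= a1.
by rewrite add0r mul1r mulVf // oner_eq0.
Qed.

Lemma affF_derive (R : realType) (al be x : R) :
  is_derive x 1 (fun y : R => al * y + be / 2 * y ^+ 2) (al + be * x).
Proof.
apply: is_derive_eq.
by rewrite /GRing.scale /= !mulr1; field.
Qed.

Lemma aff_derive (R : realType) (al be x : R) :
  is_derive x 1 (fun y : R => al + be * y) be.
Proof.
apply: is_derive_eq.
by rewrite add0r mul1r /GRing.scale /= mulr1.
Qed.

Lemma int_affine (R : realType) (al be a b : R) : a < b ->
  (\int[lebesgue_measure]_(x in `[a, b]) (al + be * x)%:E =
   (al * (b - a) + be * (b ^+ 2 - a ^+ 2) / 2)%:E)%E.
Proof.
move=> ab.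
have cF : continuous (fun y : R => al * y + be / 2 * y ^+ 2).
  move=> x; apply: cvgD; apply: cvgM; (exact: cvg_cst || exact: cvg_id || exact: exprn_continuous).
have cf : continuous (fun y : R => al + be * y).
  move=> x; apply: cvgD; first exact: cvg_cst.
  by apply: cvgM; (exact: cvg_cst || exact: cvg_id).
rewrite (@continuous_FTC2 _ _ (fun y : R => al * y + be / 2 * y ^+ 2)) //.
- by rewrite -EFinD; congr EFin; field.
- by apply: continuous_in_subspaceT => x _; apply: cf.
- split.
  + move=> x _; apply: ex_derive; exact: affF_derive.
  + by apply: cvg_at_right_filter; apply: cF.
  + by apply: cvg_at_left_filter; apply: cF.
- by move=> x _; rewrite derive1E (@derive_val _ _ _ x 1 _ _ (@affF_derive R al be x)).
Qed.

Lemma secH (R : realType) (x y : R) : Hex ex1 ex2 (x, y) <->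
  [/\ -1 <= y <= 1, -1 <= x <= 1 & -1 <= x + y <= 1].
Proof.
rewrite /Hex /Q3 /det2 /ex1 /ex2 /= !ler_norml.
have -> : x * 0 - y * 1 = - y by ring.
have -> : x * 1 - y * 0 = x by ring.
have -> : x * (1 - 0) - y * (0 - 1) = x + y by ring.
split.
  move=> [/andP[h1 h2] [/andP[h3 h4] /andP[h5 h6]]].
  by split; apply/andP; split; lra.
move=> [/andP[h1 h2] /andP[h3 h4] /andP[h5 h6]].
by split; [|split]; apply/andP; split; lra.
Qed.

Lemma lebH (R : realType) (x : R) :
  lebesgue_measure (xsection (Hex (@ex1 R) ex2) x) =
  ((fun t : R => ((2 - `|t|)%R)%:E) \_ (`[(-1)%R, 1%R]%classic : set R)) x.
Proof.
rewrite patchE xsectionE.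
case: ifPn => [|hx].
  rewrite inE /= in_itv /= => /andP[x1 x2].
  have [x0|x0] := leP 0 x.
    rewrite (_ : _ @^-1` _ = `[-1, 1 - x]%classic); last first.
      apply/seteqP; split => y /=; rewrite in_itv /=.
        by move=> /secH [/andP[? ?] _ /andP[? ?]]; apply/andP; split; lra.
      by move=> /andP[? ?]; apply/secH; split; apply/andP; split; lra.
    rewrite lebesgue_measure_itv /= lte_fin.
    have -> : (-1 < 1 - x) = true by apply/idP; lra.
    by rewrite -EFinB ger0_norm //; congr EFin; ring.
  rewrite (_ : _ @^-1` _ = `[-1 - x, 1]%classic); last first.
    apply/seteqP; split => y /=; rewrite in_itv /=.
      by move=> /secH [/andP[? ?] _ /andP[? ?]]; apply/andP; split; lra.
    by move=> /andP[? ?]; apply/secH; split; apply/andP; split; lra.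
  rewrite lebesgue_measure_itv /= lte_fin.
  have -> : (-1 - x < 1) = true by apply/idP; lra.
  by rewrite -EFinB ltr0_norm //; congr EFin; ring.
rewrite (_ : _ @^-1` _ = set0) ?measure0 //.
apply/seteqP; split => y //= /secH [_ /andP[h1 h2] _].
by apply: (negP hx); apply: mem_set; rewrite /= in_itv /= h1 h2.
Qed.

Lemma areaH (R : realType) : area (Hex (@ex1 R) ex2) = 3%:E.
Proof.
rewrite /area /product_measure1 /=.
under eq_integral do rewrite lebH.
rewrite -integral_mkcond.
have mg (D : set R) : measurable_fun D (fun t : R => ((2 - `|t|)%R)%:E).
  apply/measurable_EFinP; apply: measurable_funB => //; exact: normr_measurable.
have -> : (`[(-1)%R, 1%R]%classic : set R) = `[(-1)%R, 0%R[%classic `|` `[0%R, 1%R]%classic.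
  apply/seteqP; split => x /=; rewrite !in_itv /=.
    move=> /andP[h1 h2]; have [x0|x0] := ltP x 0.
      by left; apply/andP; split; lra.
    by right; apply/andP; split; lra.
  by move=> [|] /andP[h1 h2]; apply/andP; split; lra.
rewrite ge0_integral_setU //=.
- have I1 : (\int[@lebesgue_measure R]_(x in `[(-1)%R, 0%R[) ((2 - `|x|)%R)%:E =
      \int[@lebesgue_measure R]_(x in `[(-1)%R, 0%R]) ((2 + 1 * x)%R)%:E)%E.
    transitivity (\int[@lebesgue_measure R]_(x in `[(-1)%R, 0%R[) ((2 + 1 * x)%R)%:E)%E.
      apply: eq_integral => x; rewrite inE /= in_itv /= => /andP[h1 h2].
      by rewrite ltr0_norm //; congr EFin; ring.
    rewrite integral_itv_bndo_bndc //.
    by apply/measurable_EFinP; apply: measurable_funD => //; apply: measurable_funM.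
  have I2 : (\int[@lebesgue_measure R]_(x in `[0%R, 1%R]) ((2 - `|x|)%R)%:E =
      \int[@lebesgue_measure R]_(x in `[0%R, 1%R]) ((2 + (-1) * x)%R)%:E)%E.
    apply: eq_integral => x; rewrite inE /= in_itv /= => /andP[h1 h2].
    by rewrite ger0_norm //; congr EFin; ring.
  rewrite I1 I2.
  have l1 : (-1 : R) < 0 by rewrite ltrN10.
  have l2 : (0 : R) < 1 by rewrite ltr01.
  rewrite (@int_affine R 2 1 (-1) 0 l1) (@int_affine R 2 (-1) 0 1 l2).
  by rewrite -EFinD; congr EFin; field.
- exact: mg.
- move=> x [] hx; move: hx; rewrite /= ?in_itv /= => /andP[h1 h2]; rewrite lee_fin.
    by rewrite ltr0_norm //; lra.
  by rewrite ger0_norm //; lra.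
- apply/disj_setPS => x /= [].
  by rewrite !in_itv /= => /andP[_ h1] /andP[h2 _]; lra.
Qed.


Unset Implicit Arguments.

Theorem proposition7 (R : realType) (P : set (R * R)) :
  convex_polygon P ->
  tau @` P = polar P ->
  has_n_vertices P 6 ->
  area P = 3%:E.
Proof.
move=> hc ht hn.
have [a [b [hab ->]]] := G1 hc ht hn.
by rewrite chainA // areaH.
Qed.
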